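(* Let $\mathcal{P}_1,\dots,\mathcal{P}_k$ be finite posets and $\mathcal{P}=\times_j\mathcal{P}_j$. The maximum (finite) ND rank is always a typical ND rank.
   Context: For a finite poset $\mathcal{Q}$, the order cone $\mathcal{C}(\mathcal{Q})$ is the set of $\mathbf{f}\in\mathbb{R}^{\mathcal{Q}}$ with $f_x\ge0$ and $f_x\le f_y$ whenever $x\preceq y$. $\mathcal{N}_{\le r}$ is the set of tensors in $\mathbb{R}^{\mathcal{P}}=\otimes_j\mathbb{R}^{\mathcal{P}_j}$ of the form $\sum_{i=1}^r\otimes_{j=1}^k\mathbf{v}^{(ij)}$ with $\mathbf{v}^{(ij)}\in\mathcal{C}(\mathcal{P}_j)$, and $\mathcal{N}_r=\mathcal{N}_{\le r}\setminus\mathcal{N}_{\le r-1}$ is the set of tensors of ND rank exactly $r$. The maximum ND rank is $\sup\{r<\infty:\mathcal{N}_r\neq\emptyset\}$. A number $r$ is a typical ND rank if $\mathcal{N}_r$ has non-empty interior in $\mathbb{R}^{\mathcal{P}}$. *)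

(* Defs.v *)
From mathcomp Require Import all_boot all_order all_algebra.
From mathcomp Require Import reals.
Set Implicit Arguments. Unset Strict Implicit. Unset Printing Implicit Defensive.
Import Order.TTheory GRing.Theory Num.Theory.
Local Open Scope ring_scope.

Definition is_poset (T : finType) (le : rel T) : Prop :=
  [/\ reflexive le, antisymmetric le & transitive le].

Section ND.
Variable R : realType.

Definition order_cone (T : finType) (le : rel T) (f : T -> R) : Prop :=
  (forall x, 0 <= f x) /\ (forall x y, le x y -> f x <= f y).

Variables (k : nat) (T : 'I_k -> finType) (le : forall j, rel (T j)).

Definition prodP := {dffun forall j : 'I_k, T j}.
Definition tensor := prodP -> R.

Definition Nle (r : nat) (f : tensor) : Prop :=
  exists v : 'I_r -> forall j : 'I_k, T j -> R,
    (forall (i : 'I_r) (j : 'I_k), order_cone (@le j) (v i j)) /\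
    (forall x : prodP, f x = \sum_(i < r) \prod_(j < k) v i j (x j)).

Definition Nrank (r : nat) (f : tensor) : Prop :=
  match r with
  | 0 => Nle 0 f
  | r'.+1 => Nle r'.+1 f /\ ~ Nle r' f
  end.

(* A set S of tensors in R^P (finite-dimensional, standard topology) has
   non-empty interior: it contains a (sup-norm) open ball. *)
Definition has_nonempty_interior (S : tensor -> Prop) : Prop :=
  exists f0 : tensor, exists eps : R, 0 < eps /\
    forall f : tensor, (forall x, `|f x - f0 x| < eps) -> S f.

Definition typical_ND_rank (r : nat) : Prop := has_nonempty_interior (Nrank r).

Definition max_ND_rank (r : nat) : Prop :=
  (exists f, Nrank r f) /\ (forall r', (exists f, Nrank r' f) -> (r' <= r)%N).
End ND.

(* Main.v *)
Require Import Defs.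
From mathcomp Require Import all_boot all_order all_algebra.
From mathcomp Require Import reals.
From mathcomp Require Import all_classical all_reals all_analysis.
From Stdlib Require Import Classical.
From mathcomp Require Import ring lra.
Unset Printing Implicit Defensive.
Import Order.TTheory GRing.Theory Num.Theory.
Local Open Scope ring_scope.

Section Alg.
Variables (R : realType) (k : nat) (T : 'I_k -> finType) (le : forall j, rel (T j)).
Hypothesis Hposet : forall j, is_poset (le j).
Hypothesis k0 : (0 < k)%N.
Let j0 : 'I_k := Ordinal k0.
Notation NL := (@Nle R k T le).
Set Implicit Arguments. Unset Strict Implicit.

Lemma cone0 j : order_cone (le j) (fun _ => 0 : R).
Proof. by split. Qed.

Lemma prod0 (F : 'I_k -> R) : F j0 = 0 -> \prod_j F j = 0.
Proof. by move=> h; rewrite (bigD1 j0) //= h mul0r. Qed.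

Lemma Nle_ext n (f g : tensor R T) : (forall x, f x = g x) -> NL n f -> NL n g.
Proof. by move=> e [v [hv hf]]; exists v; split => // x; rewrite -e. Qed.

Lemma Nle_mono a b f : (a <= b)%N -> NL a f -> NL b f.
Proof.
move=> ab [v [hv hf]].
pose vv (n : nat) : forall j, T j -> R :=
  fun j y => match @insub _ (fun n => n < a)%N 'I_a n with Some i => v i j y | None => 0 end.
exists (fun i : 'I_b => vv i); split.
  move=> i j; rewrite /vv; case: insubP => [i' _ _|_]; [exact: hv|exact: cone0].
move=> x; rewrite hf.
transitivity (\sum_(i < a) (fun n => \prod_j vv n j (x j)) i).
  by apply: eq_bigr => i _; rewrite /vv valK.
rewrite (big_ord_widen _ (fun n => \prod_j vv n j (x j)) ab).
rewrite big_mkcond /=; apply: eq_bigr => i _.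
case: ifP => // /negbT hi; rewrite prod0 // /vv.
by case: insubP => [i' hi' _|//]; rewrite hi' in hi.
Qed.

Lemma Nle_add a b f g : NL a f -> NL b g ->
  NL (a + b) (fun x => f x + g x).
Proof.
move=> [v [hv hf]] [w [hw hg]].
exists (fun i => match fintype.split i with inl i1 => v i1 | inr i2 => w i2 end); split.
  by move=> i j; case: (fintype.split i).
move=> x; rewrite big_split_ord /= hf hg; congr (_ + _); apply: eq_bigr => i _.
  by rewrite -/(unsplit (inl i)) unsplitK.
by rewrite -/(unsplit (inr i)) unsplitK.
Qed.

Lemma Nle_scale n c f : 0 <= c -> NL n f -> NL n (fun x => c * f x).
Proof.
move=> c0 [v [hv hf]].
exists (fun i j y => (if j == j0 then c else 1) * v i j y); split.
  move=> i j; have [h1 h2] := hv i j; split.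
    by move=> y; apply: mulr_ge0 => //; case: ifP.
  by move=> y y' hy; apply: ler_wpM2l; [case: ifP|exact: h2].
move=> x; rewrite hf mulr_sumr; apply: eq_bigr => i _.
rewrite big_split /=; congr (_ * _).
by rewrite -big_mkcond /= big_pred1_eq.
Qed.

Lemma Nle_pure (u : forall j, T j -> R) : (forall j, order_cone (le j) (u j)) ->
  NL 1 (fun x => \prod_j u j (x j)).
Proof.
move=> hu; exists (fun _ => u); split => // x.
by rewrite big_ord1.
Qed.

Definition K (f : tensor R T) := exists n, NL n f.

Lemma K_ext f g : (forall x, f x = g x) -> K f -> K g.
Proof. by move=> e [n h]; exists n; exact: Nle_ext h. Qed.

Lemma K_sum (I : Type) (l : seq I) (F : I -> tensor R T) :
  (forall i, K (F i)) -> K (fun x => \sum_(i <- l) F i x).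
Proof.
move=> hF; elim: l => [|i l [n IH]].
  by exists 0%N; exists (fun _ j _ => 0); split => [_ j|x]; [exact: cone0|rewrite !big_nil big_ord0].
have [m hm] := hF i.
exists (m + n)%N; apply: Nle_ext (Nle_add hm IH) => x.
by rewrite big_cons.
Qed.

Lemma max_K r f : max_ND_rank R le r -> K f -> NL r f.
Proof.
move=> [_ hmax] [n hn]; elim: n hn => [|n IH] hn.
  exact: (Nle_mono _ hn).
case: (classic (NL n f)) => [h|hnot]; first exact: IH.
apply: (Nle_mono _ hn); apply: hmax; exists f; by split.
Qed.

Definition Gf (z : prodP T) j (b : bool) : T j -> R :=
  fun y => if b then (le j (z j) y)%:R else (le j (z j) y && (y != z j))%:R.
Arguments Gf : clear implicits.
Definition sgn (b : bool) : R := if b then 1 else -1.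
Definition Pz (z : prodP T) (bb : {ffun 'I_k -> bool}) (x : prodP T) : R :=
  \prod_j Gf z j (bb j) (x j).
Definition sg (bb : {ffun 'I_k -> bool}) : R := \prod_j sgn (bb j).
Definition Etens : tensor R T := fun x => \sum_z \sum_bb Pz z bb x.

Lemma Gf_cone z j b : order_cone (le j) (Gf z j b).
Proof.
have [hre han htr] := Hposet j.
split => [y|y y' hy]; first by rewrite /Gf; case: b.
rewrite /Gf; case: b => /=.
  case h: (le j (z j) y); first by rewrite (htr _ _ _ h hy).
  by rewrite ler0n.
case h: (le j (z j) y && (y != z j)); last by rewrite ler0n.
case/andP: h => h1 h2.
rewrite (htr _ _ _ h1 hy) /=.
case: eqP => [e|//]; subst y'.
by rewrite (han _ _ (introT andP (conj h1 hy))) eqxx in h2.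
Qed.

Lemma Gf_diff z j y : Gf z j true y - Gf z j false y = (y == z j)%:R.
Proof.
have [hre han htr] := Hposet j.
rewrite /Gf; case: eqP => [->|_]; first by rewrite hre /= subr0.
by rewrite /= andbT subrr.
Qed.

Lemma sum_sgP z x : \sum_bb sg bb * Pz z bb x = (x == z)%:R.
Proof.
transitivity (\sum_(bb : {ffun 'I_k -> bool}) \prod_j (sgn (bb j) * Gf z j (bb j) (x j))).
  by apply: eq_bigr => bb _; rewrite big_split.
rewrite -(bigA_distr_bigA (fun j b => sgn b * Gf z j b (x j))) /=.
under eq_bigr do rewrite big_bool /= mul1r mulN1r Gf_diff.
case: eqP => [->|hne].
  by rewrite big1 // => j _; rewrite eqxx.
have [j hj] : exists j, x j != z j.
  apply/existsP; apply: contraT; rewrite negb_exists => /forallP H.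
  by case: hne; apply/ffunP => j; apply/eqP; have := H j; rewrite negbK.
by rewrite (bigD1 j) //= (negbTE hj) mul0r.
Qed.

Lemma sg_norm bb : `|sg bb| = 1.
Proof. by rewrite normr_prod big1 // => j _; rewrite /sgn; case: (bb j); rewrite ?normrN normr1. Qed.

Lemma interior_K : exists E : tensor R T, forall h, (forall x, `|h x - E x| < 1) -> K h.
Proof.
exists Etens => h hh.
pose c z := h z - Etens z.
apply: (@K_ext (fun x => \sum_z \sum_bb (1 + c z * sg bb) * Pz z bb x)).
  move=> x.
  under eq_bigr do under eq_bigr do rewrite mulrDl mul1r -mulrA.
  under eq_bigr do rewrite big_split /= -mulr_sumr sum_sgP.
  rewrite big_split /= -/(Etens x) (bigD1 x) //= eqxx mulr1 big1 ?addr0.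
    by rewrite /c addrC subrK.
  by move=> z hz; rewrite eq_sym (negbTE hz) mulr0.
apply: K_sum => z; apply: K_sum => bb.
exists 1%N; apply: Nle_scale; last exact: (Nle_pure (fun j => Gf_cone z j (bb j))).
have : `|c z * sg bb| < 1 by rewrite normrM sg_norm mulr1; exact: hh.
rewrite ltr_norml => /andP[h1 _].
lra.
Qed.

Lemma normalize m g M (x0 : prodP T) : 1 <= M -> (forall x, g x <= M) -> NL m g ->
  exists w : 'I_m -> forall j, T j -> R,
    (forall i j, order_cone (le j) (w i j)) /\ (forall i j y, w i j y <= M) /\
    (forall x, g x = \sum_(i < m) \prod_j w i j (x j)).
Proof.
move=> M1 gM [v [hv hg]].
have M0 : 0 <= M by apply: le_trans M1.
pose ys i j := [arg max_(y > x0 j) v i j y]%O.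
have ysP i j y : v i j y <= v i j (ys i j).
  by rewrite /ys; case: arg_maxP => // y' _ H; exact: H.
pose a i j := v i j (ys i j).
have a0 i j : 0 <= a i j by have [h _] := hv i j; exact: h.
pose xs i : prodP T := @finfun _ (fun j => T j) (fun j => ys i j).
have prodM i : \prod_j a i j <= M.
  apply: (le_trans _ (gM (xs i))); rewrite hg (bigD1 i) //=.
  rewrite [X in _ <= X + _](eq_bigr (fun j => a i j)); last by move=> j _; rewrite ffunE.
  rewrite lerDl.
  by apply: sumr_ge0 => i' _; apply: prodr_ge0 => j _; have [h _] := hv i' j; exact: h.
pose lam i j := if j == j0 then \prod_(j' | j' != j0) a i j' else (a i j)^-1.
pose w i := if \prod_j a i j == 0 then (fun j (y : T j) => 0 : R) else (fun j y => v i j y * lam i j).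
exists w; split; [|split].
- move=> i j; rewrite /w; case: ifP => _; first exact: cone0.
  have [h1 h2] := hv i j.
  have l0 : 0 <= lam i j.
    by rewrite /lam; case: ifP => _; [apply: prodr_ge0 => j' _ |rewrite invr_ge0].
  split => [y|y y' hy]; first exact: mulr_ge0.
  by apply: ler_wpM2r => //; exact: h2.
- move=> i j y; rewrite /w; case: ifP => // /negbT hne.
  have ha j' : 0 < a i j'.
    by rewrite lt0r a0 andbT; move/prodf_neq0: hne; apply.
  have [h1 h2] := hv i j.
  rewrite /lam; case: ifP => [/eqP ej|ej].
    have := prodM i; rewrite (bigD1 j) //= => hP; apply: (le_trans _ hP).
    rewrite (eq_bigl (fun j' => j' != j)); last by move=> j'; rewrite ej.
    by apply: ler_wpM2r; [apply: prodr_ge0 => j' _|exact: ysP].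
  apply: (le_trans _ M1); rewrite ler_pdivrMr ?mul1r //; exact: ysP.
move=> x; rewrite hg; apply: eq_bigr => i _; rewrite /w; case: ifP => [/eqP h|/negbT hne].
  rewrite (prod0 (F := fun _ => 0)) //.
  have /prodf_eq0 [j _ /eqP hj] : \prod_j a i j == 0 by rewrite h.
  rewrite (bigD1 j) //=.
  have -> : v i j (x j) = 0.
    have [h1 _] := hv i j; have hle := ysP i j (x j).
    have hj' : v i j (ys i j) = 0 := hj.
    rewrite hj' in hle; apply: le_anti; rewrite hle; exact: h1.
  by rewrite mul0r.
rewrite big_split /=.
suff -> : \prod_j lam i j = 1 by rewrite mulr1.
rewrite (bigD1 j0) // {1}/lam eqxx.
rewrite [\prod_(j | j != j0) lam i j](eq_bigr (fun j => (a i j)^-1)); last by move=> j hj; rewrite /lam (negbTE hj).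
rewrite prodfV; apply: mulfV.
apply/prodf_neq0 => j _; move/prodf_neq0: hne; apply => //.
Qed.

Import numFieldNormedType.Exports.
Local Open Scope classical_set_scope.
Local Open Scope ring_scope.

Lemma cont_sum n (I : Type) (l : seq I) (P : pred I) (F : I -> 'rV[R]_n -> R) :
  (forall i, continuous (F i)) -> continuous (fun p => \sum_(i <- l | P i) F i p).
Proof.
move=> hF; elim: l => [|i l IH].
  rewrite (_ : (fun p => \sum_(i <- [::] | P i) F i p) = fun=> 0); first exact: cst_continuous.
  by apply: funext => p; rewrite big_nil.
rewrite (_ : (fun p => \sum_(j <- i :: l | P j) F j p) = (fun p => (if P i then F i p else 0) + \sum_(j <- l | P j) F j p)); last first.
  by apply: funext => p; rewrite big_cons; case: ifP => _; rewrite ?add0r.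
move=> p; apply: continuousD; last exact: IH.
by case: (P i); [exact: hF|exact: cst_continuous].
Qed.

Lemma cont_prod n (I : Type) (l : seq I) (P : pred I) (F : I -> 'rV[R]_n -> R) :
  (forall i, continuous (F i)) -> continuous (fun p => \prod_(i <- l | P i) F i p).
Proof.
move=> hF; elim: l => [|i l IH].
  rewrite (_ : (fun p => \prod_(i <- [::] | P i) F i p) = fun=> 1); first exact: cst_continuous.
  by apply: funext => p; rewrite big_nil.
rewrite (_ : (fun p => \prod_(j <- i :: l | P j) F j p) = (fun p => (if P i then F i p else 1) * \prod_(j <- l | P j) F j p)); last first.
  by apply: funext => p; rewrite big_cons; case: ifP => _; rewrite ?mul1r.
move=> p; apply: continuousM; last exact: IH.
by case: (P i); [exact: hF|exact: cst_continuous].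
Qed.

Lemma cont_norm n (F : 'rV[R]_n -> R) : continuous F -> continuous (fun p => `|F p|).
Proof. by move=> hF p; exact: (cvg_norm (hF p)). Qed.

Lemma cont_sub n (F G : 'rV[R]_n -> R) : continuous F -> continuous G -> continuous (fun p => F p - G p).
Proof. by move=> hF hG p; apply: continuousB; [exact: hF|exact: hG]. Qed.

Definition NI m := #|{: ('I_m * {j : 'I_k & T j})%type}|.
Definition crd m (p : 'rV[R]_(NI m)) (i : 'I_m) j (y : T j) : R :=
  p ord0 (enum_rank (i, existT (fun j => T j : Type) j y)).
Arguments crd {m} p i j y.
Definition Phi m (p : 'rV[R]_(NI m)) (x : prodP T) : R := \sum_(i < m) \prod_j crd p i j (x j).
Definition pen m (p : 'rV[R]_(NI m)) : R :=
  \sum_(i < m) \sum_j \sum_(y : T j) \sum_(y' : T j | le j y y')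
    (`|crd p i j y' - crd p i j y| - (crd p i j y' - crd p i j y)).
Definition Dfun m (f : tensor R T) (p : 'rV[R]_(NI m)) : R :=
  \sum_x `|Phi p x - f x| + pen p.

Lemma crd_cont m i j y : continuous (fun p : 'rV[R]_(NI m) => crd p i j y).
Proof. exact: coord_continuous. Qed.

Lemma Dfun_cont m f : continuous (@Dfun m f).
Proof.
move=> p; apply: continuousD; last first.
  apply: cont_sum => i; apply: cont_sum => j; apply: cont_sum => y; apply: cont_sum => y'.
  by apply: cont_sub; [apply: cont_norm|]; apply: cont_sub; apply: crd_cont.
apply: cont_sum => x; apply: cont_norm; apply: cont_sub; last exact: cst_continuous.
by apply: cont_sum => i; apply: cont_prod => j; apply: crd_cont.
Qed.

Lemma pen0_mono m (p : 'rV[R]_(NI m)) : pen p = 0 ->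
  forall i j y y', le j y y' -> crd p i j y <= crd p i j y'.
Proof.
move=> h0 i j y y' hy; rewrite /pen in h0.
have t0 i1 j1 (y1 y1' : T j1) : 0 <= `|crd p i1 j1 y1' - crd p i1 j1 y1| - (crd p i1 j1 y1' - crd p i1 j1 y1).
  by rewrite subr_ge0 ler_norm.
have h1 := @psumr_eq0P _ _ _ _ (fun a _ => sumr_ge0 _ (fun b _ => sumr_ge0 _ (fun c _ => sumr_ge0 _ (fun d _ => t0 a b c d)))) h0 i isT.
have h2 := @psumr_eq0P _ _ _ _ (fun b _ => sumr_ge0 _ (fun c _ => sumr_ge0 _ (fun d _ => t0 i b c d))) h1 j isT.
have h3 := @psumr_eq0P _ _ _ _ (fun c _ => sumr_ge0 _ (fun d _ => t0 i j c d)) h2 y isT.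
have h4 := @psumr_eq0P _ _ _ _ (fun d _ => t0 i j y d) h3 y' hy.
by move/eqP: h4; rewrite subr_eq0 => /eqP/normr_idP; rewrite subr_ge0.
Qed.

Lemma closed_Nle m f : ~ NL m f ->
  exists eps : R, 0 < eps /\ forall g, (forall x, `|g x - f x| < eps) -> ~ NL m g.
Proof.
move=> hf.
case: (pickP (fun _ : prodP T => true)) => [x0 _|hnone]; last first.
  exfalso; apply: hf; exists (fun _ j _ => 0); split => [i j|x]; first exact: cone0.
  by have := hnone x.
pose M := \sum_x `|f x| + 1.
have M1 : 1 <= M by rewrite /M lerDr sumr_ge0.
have M0 : 0 <= M by apply: le_trans M1.
have fM x : `|f x| <= M - 1.
  by rewrite /M addrK (bigD1 x) //= lerDl sumr_ge0.
pose Box := [set p : 'rV[R]_(NI m) | forall c, `[0, M]%classic (p ord0 c)].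
have cBox : compact Box.
  exact: (@rV_compact _ _ (fun=> `[0, M]%classic) (fun _ => @segment_compact _ 0 M)).
have nBox : Box !=set0.
  by exists 0 => c; rewrite /= mxE in_itv /= lexx M0.
have [c0 hc0 hmin] := EVT_min_rV nBox cBox (continuous_subspaceT (@Dfun_cont m f)).
have pen_ge0 (p : 'rV[R]_(NI m)) : 0 <= pen p.
  apply: sumr_ge0 => i _; apply: sumr_ge0 => j _; apply: sumr_ge0 => y _; apply: sumr_ge0 => y' _.
  by rewrite subr_ge0 ler_norm.
have D1_ge0 (p : 'rV[R]_(NI m)) : 0 <= \sum_x `|Phi p x - f x|.
  by apply: sumr_ge0 => x _.
have D0 : 0 < Dfun f c0.
  rewrite lt_def addr_ge0 // andbT; apply/negP; rewrite paddr_eq0 // => /andP[/eqP h1 /eqP h2].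
  apply: hf; exists (crd c0); split => [i j|x]; last first.
    have := @psumr_eq0P _ _ _ _ (fun x _ => normr_ge0 _) h1 x isT.
    by move/eqP; rewrite normr_eq0 subr_eq0 => /eqP <-.
  split => [y|y y' hy].
    have := set_mem hc0 (enum_rank (i, existT (fun j => T j : Type) j y)).
    by rewrite /= in_itv /= => /andP[].
  exact: pen0_mono h2 i j y y' hy.
set d := Dfun f c0 in D0 hmin.
pose N : R := #|{: prodP T}|%:R.
have N0 : 0 <= N by rewrite /N ler0n.
exists (Num.min 1 (d / (N + 1))); split.
  by rewrite lt_min ltr01 /= divr_gt0 // ltr_wpDl.
move=> g hg hNg.
have gM x : g x <= M.
  have h := hg x; have h' : `|g x - f x| < 1 by apply: (lt_le_trans h); rewrite ge_min lexx.
  have := fM x; rewrite ltr_norml in h'; case/andP: h' => _ h2 h3.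
  have := ler_norm (f x); lra.
have [w [hw [hwM hgw]]] := normalize x0 M1 gM hNg.
pose p : 'rV[R]_(NI m) := \row_c (let: (i, s) := enum_val c in w i (projT1 s) (projT2 s)).
have crdp i j y : crd p i j y = w i j y by rewrite /crd mxE enum_rankK.
have pBox : p \in Box.
  apply: mem_set => c; rewrite /p mxE /=; case: (enum_val c) => i [j y] /=.
  rewrite in_itv /= (hwM i j y) andbT; by have [h _] := hw i j; exact: h.
have Dp : Dfun f p = \sum_x `|g x - f x|.
  rewrite /Dfun [pen p]big1 ?addr0.
    by apply: eq_bigr => x _; rewrite hgw /Phi; congr (`|_ - _|); apply: eq_bigr => i _; apply: eq_bigr => j _; rewrite crdp.
  move=> i _; apply: big1 => j _; apply: big1 => y _; apply: big1 => y' hy.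
  rewrite !crdp; have [_ h] := hw i j; have := h _ _ hy; rewrite -subr_ge0 => /ger0_norm ->.
  by rewrite subrr.
have := hmin p pBox; rewrite Dp => hle.
have : \sum_x `|g x - f x| < d.
  apply: (le_lt_trans (ler_sum _ (fun x _ => ltW (hg x)))).
  rewrite sumr_const -/N.
  apply: (le_lt_trans (y := N * (d / (N + 1)))).
    rewrite -mulr_natl -/N; apply: ler_wpM2l => //; by rewrite ge_min lexx orbT.
  rewrite mulrA ltr_pdivrMr; last by rewrite ltr_wpDl.
  nra.
by rewrite ltNge hle.
Qed.

Lemma main_pos r : max_ND_rank R le r -> typical_ND_rank R le r.
Proof.
move=> hmax; have [E hE] := interior_K.
have [[g0 hg0] _] := hmax.
case: r hmax hg0 => [|r'] hmax hg0.
  by exists E, 1; split => // f hf; exact: (max_K hmax (hE f hf)).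
case: hg0 => hg0r hg0n.
have [eps [he hcl]] := closed_Nle hg0n.
pose S := \sum_x `|E x|.
have S0 : 0 <= S by apply: sumr_ge0.
have ES x : `|E x| <= S by rewrite /S (bigD1 x) //= lerDl sumr_ge0.
pose t := eps / (2 * (S + 1)).
have t0 : 0 < t by rewrite divr_gt0 // mulr_gt0 // ltr_wpDl.
have teq : t * (2 * (S + 1)) = eps by rewrite /t divfK // gt_eqF // mulr_gt0 // ltr_wpDl.
have tS : t * S <= eps / 2 by nra.
exists (fun x => g0 x + t * E x), (Num.min t (eps / 2)); split.
  by rewrite lt_min t0 divr_gt0.
move=> f hf; split.
  apply: (max_K hmax).
  pose h' x := (f x - g0 x) / t.
  have hK : K h'.
    apply: hE => x; have := hf x; rewrite lt_min => /andP[h1 _].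
    have -> : h' x - E x = (f x - (g0 x + t * E x)) / t.
      by rewrite /h'; field; rewrite gt_eqF.
    by rewrite normrM normfV (gtr0_norm t0) ltr_pdivrMr // mul1r.
  case: hK => n hn.
  have := Nle_add hg0r (Nle_scale (ltW t0) hn).
  move=> hs; exists (r'.+1 + n)%N; apply: (Nle_ext _ hs) => x.
  by rewrite /h' mulrC divfK ?gt_eqF // addrC subrK.
apply: (hcl f) => x.
have := hf x; rewrite lt_min => /andP[_ h2].
have h3 := ES x.
have h4 : `|t * E x| <= eps / 2.
  by rewrite normrM (gtr0_norm t0); apply: (le_trans _ tS); apply: ler_wpM2l => //; exact: ltW.
have := ler_normD (f x - (g0 x + t * E x)) (t * E x).
have -> : f x - (g0 x + t * E x) + t * E x = f x - g0 x by ring.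
lra.
Qed.

End Alg.

Lemma I0_empty (j : 'I_0) : False.
Proof. by case: j. Qed.

Theorem theorem10 (R : realType) (k : nat) (T : 'I_k -> finType)
  (le : forall j, rel (T j)) (Hposet : forall j, is_poset (le j)) (r : nat) :
  max_ND_rank R le r -> typical_ND_rank R le r.
Proof.
move=> hmax; case: (posnP k) => [k0|kpos]; last exact: (main_pos Hposet kpos).
exfalso; subst k; case: hmax => _ hb.
have x0 : prodP T := @finfun _ (fun j => T j) (fun j => False_rect _ (I0_empty j)).
have hN n (f : tensor R T) : Nle le n f -> f x0 = n%:R.
  by case=> v [_ hv]; rewrite hv; under eq_bigr do rewrite big_ord0; rewrite sumr_const card_ord.
have := hb r.+1; rewrite ltnn => h; suff: false by []; apply: h.
exists (fun _ => r.+1%:R); split.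
  exists (fun _ j _ => 0); split => [i j|x]; first by case: (I0_empty j).
  by under eq_bigr do rewrite big_ord0; rewrite sumr_const card_ord.
move/hN/eqP; rewrite eqr_nat => /eqP h; exact: (n_Sn r (esym h)).
Qed.
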